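(* Let $\mathcal{R}$ be a commutative ring with unit, let $\mathcal{C}$ be a finite abstract simplicial complex, and let $\mathcal{V}=\{V_0,\ldots,V_n\}$ be a partition of $V(\mathcal{C})$. Let $S=[u_0,\ldots,u_n]$ and $T=[v_0,\ldots,v_n]$ be oriented colorful simplices of $(\mathcal{C},\mathcal{V})$ with $u_i,v_i\in V_i$ for all $i$. If $\widetilde H_{|I|-1}(\mathcal{C}[V_I];\mathcal{R})=0$ for all nonempty $I\subseteq\{0,1,\ldots,n\}$, where $V_I=\bigcup_{i\in I}V_i$, then there exists a chain $K\in C_{n+1}(\mathcal{C};\mathcal{R})$ whose boundary $\partial K$ has colorful support $T-S$.
   Context: $\mathcal{C}[X]=\{\sigma\in\mathcal{C}:\sigma\subseteq X\}$. A colorful simplex is a simplex of $\mathcal{C}$ with exactly one vertex from each $V_i$. $C_p(\mathcal{C};\mathcal{R})$ is the free $\mathcal{R}$-module on oriented $p$-simplices (with $[v_{\pi(0)},\ldots,v_{\pi(p)}]=\mathrm{sign}(\pi)[v_0,\ldots,v_p]$), $\partial$ is the usual simplicial boundary, and reduced homology uses $C_{-1}=\mathcal{R}$ with the augmentation map as $\partial_0$. The colorful support of an $n$-chain $c\in C_n(\mathcal{C};\mathcal{R})$ is the $n$-chain obtained from $c$ by keeping only those terms that are oriented colorful simplices of $(\mathcal{C},\mathcal{V})$. *)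

(* Defs.v *)
From HB Require Import structures.
From mathcomp Require Import all_boot all_order all_algebra.
Set Implicit Arguments. Unset Strict Implicit. Unset Printing Implicit Defensive.
Import GRing.Theory.
Local Open Scope ring_scope.

Definition is_complex (V : finType) (C : {set {set V}}) : Prop :=
  (forall s : {set V}, s \in C -> s != set0) /\
  (forall s t : {set V}, s \in C -> t \subset s -> t != set0 -> t \in C).

(* A fixed total order on vertices (used to pick the sorted representative
   of each oriented simplex): v < w iff enum_rank v < enum_rank w. *)
Definition vlt (V : finType) (v w : V) : bool := (enum_rank v < enum_rank w)%N.

(* Chains: R-valued functions on vertex sets; the p-chains of C are those
   supported on faces of C of cardinality p+1.  The value at a face s is the
   coefficient of the oriented simplex listing s in increasing order.
   The empty set carries the coefficient of C_{-1} = R (augmentation). *)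
Definition chain (V : finType) (R : comPzRingType) := {ffun {set V} -> R}.

Definition chain_in (V : finType) (R : comPzRingType) (C : {set {set V}})
  (X : {set V}) (k : nat) (c : chain V R) : Prop :=
  forall s, c s != 0 -> [/\ s \in C, s \subset X & #|s| = k].

(* simplicial boundary (for 0-chains it is the augmentation map):
   removing vertex v from the sorted simplex v |: t contributes sign
   (-1)^(position of v) = (-1)^#{w in t | w < v}. *)
Definition bd (V : finType) (R : comPzRingType) (c : chain V R) : chain V R :=
  [ffun t : {set V} =>
     \sum_(v in ~: t) (-1) ^+ #|[set w in t | vlt w v]| * c (v |: t)].

Definition ninv (V : finType) (n : nat) (u : 'I_n.+1 -> V) : nat :=
  #|[set p : 'I_n.+1 * 'I_n.+1 | (p.1 < p.2)%N && vlt (u p.2) (u p.1)]|.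

Definition osimplex (V : finType) (R : comPzRingType) (n : nat)
  (u : 'I_n.+1 -> V) : chain V R :=
  [ffun s : {set V} =>
     if s == [set u i | i : 'I_n.+1] then (-1) ^+ ninv u else 0].

(* The partition V_0,...,V_n of the vertex set is given by a colouring
   col : V -> 'I_n.+1, with V_i = col^-1(i). *)
Definition colclass (V : finType) (n : nat) (col : V -> 'I_n.+1)
  (I : {set 'I_n.+1}) : {set V} := [set v | col v \in I].

Definition colorful (V : finType) (n : nat) (C : {set {set V}})
  (col : V -> 'I_n.+1) (s : {set V}) : bool :=
  (s \in C) && [forall i : 'I_n.+1, #|[set v in s | col v == i]| == 1%N].

Definition colorful_support (V : finType) (R : comPzRingType) (n : nat)
  (C : {set {set V}}) (col : V -> 'I_n.+1) (c : chain V R) : chain V R :=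
  [ffun s => if colorful C col s then c s else 0].

(* tilde H_{k-1}(C[X]; R) = 0 : every (k-1)-cycle (chain on k-vertex faces,
   with the augmentation as boundary in degree 0) is a boundary *)
Definition reduced_acyclic (V : finType) (R : comPzRingType) (C : {set {set V}})
  (X : {set V}) (k : nat) : Prop :=
  forall c : chain V R, chain_in C X k c -> bd c = 0 ->
    exists b : chain V R, chain_in C X k.+1 b /\ bd b = c.

(* Main.v *)
Require Import Defs.
From HB Require Import structures.
From mathcomp Require Import all_boot all_order all_algebra zify.
Import GRing.Theory.
Set Implicit Arguments. Unset Strict Implicit. Unset Printing Implicit Defensive.
Local Open Scope ring_scope.

Definition sc (R : comPzRingType) (V : finType) (c : R) (F : chain V R) : chain V R :=
  [ffun s => c * F s].
Definition pos (n : nat) (I : {set 'I_n.+1}) (i : 'I_n.+1) : nat :=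
  #|[set k in I | (k < i)%N]|.
Definition sg (R : comPzRingType) (n : nat) (I : {set 'I_n.+1}) (i : 'I_n.+1) : R :=
  (-1) ^+ pos I i.
Definition ninvI (V : finType) (n : nat) (x : 'I_n.+1 -> V) (I : {set 'I_n.+1}) : nat :=
  (\sum_(a in I) \sum_(b in I) ((a < b)%N && vlt (x b) (x a)))%N.
Definition O (R : comPzRingType) (V : finType) (n : nat) (x : 'I_n.+1 -> V)
  (I : {set 'I_n.+1}) : chain V R :=
  [ffun s => if s == [set x i | i in I] then (-1) ^+ ninvI x I else 0].

Lemma bdD (R : comPzRingType) (V : finType) (a b : chain V R) :
  bd (a + b) = bd a + bd b.
Proof.
apply/ffunP => t; rewrite !ffunE -big_split; apply: eq_bigr => w _.
by rewrite !ffunE mulrDr.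
Qed.

Lemma bdN (R : comPzRingType) (V : finType) (a : chain V R) :
  bd (- a) = - bd a.
Proof.
apply/ffunP => t; rewrite !ffunE -sumrN; apply: eq_bigr => w _.
by rewrite !ffunE mulrN.
Qed.

Lemma bdB (R : comPzRingType) (V : finType) (a b : chain V R) :
  bd (a - b) = bd a - bd b.
Proof. by rewrite bdD bdN. Qed.

Lemma bd0 (R : comPzRingType) (V : finType) : bd (0 : chain V R) = 0.
Proof.
apply/ffunP => t; rewrite !ffunE big1 // => w _; by rewrite ffunE mulr0.
Qed.

Lemma bd_sum (R : comPzRingType) (V : finType) (I : finType) (P : pred I)
  (F : I -> chain V R) :
  bd (\sum_(i | P i) F i) = \sum_(i | P i) bd (F i).
Proof.
apply/ffunP => t; rewrite ffunE sum_ffunE.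
under eq_bigr do rewrite sum_ffunE mulr_sumr.
rewrite exchange_big; apply: eq_bigr => i _; by rewrite ffunE.
Qed.

Lemma bd_sc (R : comPzRingType) (V : finType) (c : R) (F : chain V R) :
  bd (sc c F) = sc c (bd F).
Proof.
apply/ffunP => t; rewrite !ffunE mulr_sumr; apply: eq_bigr => w _.
by rewrite ffunE mulrCA.
Qed.

Lemma card_cnt (V : finType) (n : nat) (x : 'I_n.+1 -> V) (injx : injective x)
  (J : {set 'I_n.+1}) (P : pred V) :
  #|[set w in [set x j | j in J] | P w]| = (\sum_(j in J) P (x j))%N.
Proof.
rewrite -sum1_card (eq_bigl (fun w => (w \in [set x j | j in J]) && P w)); last first.
  by move=> w; rewrite !inE.
rewrite big_imset_cond; last by move=> a b _ _; apply: injx.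
by rewrite big_mkcondr /=; apply: eq_bigr => j _; case: (P (x j)).
Qed.

Lemma pos_sum (n : nat) (I : {set 'I_n.+1}) i : i \in I ->
  pos I i = (\sum_(j in I :\ i) (j < i)%N)%N.
Proof.
move=> iI; rewrite /pos -sum1_card.
rewrite (eq_bigl (fun k => (k \in I) && (k < i)%N)); last by move=> k; rewrite !inE.
rewrite -big_mkcondr /=.
apply: eq_bigl => k; rewrite !inE; case: eqP => [->|] /=; by rewrite ?ltnn ?andbF.
Qed.

Lemma ninv_split (V : finType) (n : nat) (x : 'I_n.+1 -> V) (I : {set 'I_n.+1}) i :
  i \in I ->
  ninvI x I = (ninvI x (I :\ i) + \sum_(j in I :\ i) ((j < i)%N && vlt (x i) (x j))
     + \sum_(j in I :\ i) ((i < j)%N && vlt (x j) (x i)))%N.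
Proof.
move=> iI.
have E : forall F : 'I_n.+1 -> nat, (\sum_(j in I | j != i) F j = \sum_(j in I :\ i) F j)%N.
  by move=> F; apply: eq_bigl => j; rewrite !inE andbC.
rewrite /ninvI (bigD1 i iI) /= E (bigD1 i iI) /= ltnn /= add0n E.
rewrite (eq_bigr (fun a : 'I_n.+1 => ((a < i)%N && vlt (x i) (x a)) + \sum_(b in I :\ i) ((a < b)%N && vlt (x b) (x a)))%N); last first.
  by move=> a _; rewrite (bigD1 i iI) /= E.
rewrite big_split /=; lia.
Qed.

Lemma vlt_tot (V : finType) (a b : V) : a != b -> vlt a b = ~~ vlt b a.
Proof.
move=> ab; rewrite /vlt.
have : (enum_rank a : nat) != enum_rank b.
  apply: contra ab => /eqP /val_inj/enum_rank_inj ->; by [].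
by case: ltngtP.
Qed.

Lemma parity (V : finType) (n : nat) (x : 'I_n.+1 -> V) (injx : injective x)
  (I : {set 'I_n.+1}) i : i \in I ->
  (#|[set w in [set x j | j in I :\ i] | vlt w (x i)]| + ninvI x I =
  pos I i + ninvI x (I :\ i) +
  (\sum_(j in I :\ i) ((i < j)%N && vlt (x j) (x i))).*2)%N.
Proof.
move=> iI; rewrite card_cnt // (ninv_split x iI) (pos_sum iI).
have key : (\sum_(j in I :\ i) (vlt (x j) (x i) + ((j < i)%N && vlt (x i) (x j))
   + ((i < j)%N && vlt (x j) (x i))) =
   \sum_(j in I :\ i) ((j < i)%N + ((i < j)%N && vlt (x j) (x i))
   + ((i < j)%N && vlt (x j) (x i))))%N.
  apply: eq_bigr => j.
  rewrite !inE => /andP[ji _].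
  have xji : x j != x i by apply: contra ji => /eqP/injx ->.
  have hji : (j : nat) != i by apply: contra ji => /eqP/val_inj ->.
  rewrite (vlt_tot xji).
  move: hji; case: ltngtP => //= _ _; by case: (vlt (x i) (x j)).
rewrite !big_split /= in key.
rewrite -addnn; move: key.
set S1 := (\sum_(j in I :\ i) vlt (x j) (x i))%N.
set S2 := (\sum_(j in I :\ i) ((j < i)%N && vlt (x i) (x j)))%N.
set S3 := (\sum_(j in I :\ i) ((i < j)%N && vlt (x j) (x i)))%N.
set S4 := (\sum_(j in I :\ i) (j < i)%N)%N.
lia.
Qed.

Lemma imsetD1_inj (V : finType) (n : nat) (x : 'I_n.+1 -> V) (injx : injective x)
  (I : {set 'I_n.+1}) j : j \in I ->
  [set x i | i in I :\ j] = [set x i | i in I] :\ x j.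
Proof.
move=> jI; rewrite -{2}(setD1K jI) imsetU1 setU1K //.
by rewrite mem_imset // !inE eqxx.
Qed.

Lemma sign_dbl (R : comPzRingType) (a b : nat) : (-1) ^+ (a + b.*2) = (-1) ^+ a :> R.
Proof.
by rewrite exprD -addnn exprD -expr2 sqrr_sign mulr1.
Qed.

Lemma bdO (R : comPzRingType) (V : finType) (n : nat) (x : 'I_n.+1 -> V)
  (injx : injective x) (I : {set 'I_n.+1}) :
  bd (O R x I) = \sum_(i in I) sc (sg R I i) (O R x (I :\ i)).
Proof.
apply/ffunP => t; rewrite ffunE sum_ffunE.
under eq_bigr do rewrite ffunE.
under [RHS]eq_bigr do rewrite !ffunE.
case: (pickP (fun i => (i \in I) && (t == [set x j | j in I :\ i]))) =>
  [i /andP[iI /eqP ->] | none].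
- rewrite [RHS](bigD1 i) //= eqxx [X in _ = _ + X]big1 ?addr0; last first.
    move=> j /andP[jI ji]; case: eqP => [/(imset_inj injx) E|]; last by rewrite mulr0.
    have : i \in I :\ j by rewrite !inE eq_sym ji.
    by rewrite -E !inE eqxx.
  rewrite (bigD1 (x i)) /=; last by rewrite !inE mem_imset // !inE eqxx.
  rewrite -imsetU1 setD1K // eqxx big1 ?addr0; last first.
    move=> w /andP[wt wxi]; case: eqP => [E|]; last by rewrite mulr0.
    have : w \in [set x j | j in I] by rewrite -E setU11.
    case/imsetP => j jI wj.
    have ji : j != i by apply: contra wxi => /eqP <-; rewrite wj.
    move: wt; rewrite !inE wj mem_imset // !inE ji jI //.
  rewrite -!exprD parity // sign_dbl //.
- rewrite [RHS]big1; last first.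
    move=> j jI; case: eqP => [E|]; last by rewrite mulr0.
    by have := none j; rewrite jI E eqxx.
  apply: big1 => w; rewrite inE => wt; case: eqP => [E|]; last by rewrite mulr0.
  have : w \in [set x j | j in I] by rewrite -E setU11.
  case/imsetP => j jI wj.
  by have := none j; rewrite jI /= imsetD1_inj // -E -wj setU1K // eqxx.
Qed.

Lemma pair_cancel (R : comPzRingType) (n : nat) (I : {set 'I_n.+1})
  (G : {set 'I_n.+1} -> R) i j : i \in I -> j \in I -> (j < i)%N ->
  sg R I i * (sg R (I :\ i) j * G (I :\ i :\ j)) +
  sg R I j * (sg R (I :\ j) i * G (I :\ j :\ i)) = 0.
Proof.
move=> iI jI ji.
have e1 : pos (I :\ i) j = pos I j.
  rewrite /pos; apply: eq_card => k; rewrite !inE.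
  case: (eqVneq k i) => [->|//]; by rewrite ltnNge (ltnW ji) /= andbF.
have e2 : pos I i = (pos (I :\ j) i).+1.
  rewrite /pos (cardsD1 j) !inE jI ji /= add1n; congr _.+1.
  by apply: eq_card => k; rewrite !inE andbA.
have e3 : I :\ i :\ j = I :\ j :\ i.
  by apply/setP => k; rewrite !inE; case: (k == i); case: (k == j).
rewrite /sg e1 e2 e3 exprS mulN1r mulNr [in X in _ + X]mulrCA addNr //.
Qed.

Lemma dsum (R : comPzRingType) (n : nat) (I : {set 'I_n.+1})
  (G : {set 'I_n.+1} -> R) :
  \sum_(i in I) sg R I i * \sum_(j in I :\ i) sg R (I :\ i) j * G (I :\ i :\ j) = 0.
Proof.
set h := fun i j => sg R I i * (sg R (I :\ i) j * G (I :\ i :\ j)).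
transitivity (\sum_i \sum_j (if [&& i \in I, j \in I & (j < i)%N] then h i j else 0)
  + \sum_i \sum_j (if [&& i \in I, j \in I & (i < j)%N] then h i j else 0)).
  rewrite -big_split big_mkcond /=; apply: eq_bigr => i _.
  case iI: (i \in I) => /=; last by rewrite big1 ?add0r // => j _; rewrite addr0.
  rewrite mulr_sumr -big_split big_mkcond /=; apply: eq_bigr => j _.
  rewrite !inE; case jI: (j \in I); rewrite ?andbF ?andbT /=; last by rewrite addr0.
  case: (ltngtP j i) => [ji|ij|/val_inj ->] /=; rewrite ?eqxx ?addr0 ?add0r //.
    by rewrite ifT //; apply/eqP => E; rewrite E ltnn in ji.
  by rewrite ifT //; apply/eqP => E; rewrite E ltnn in ij.
rewrite [X in _ + X]exchange_big -big_split big1 // => i _.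
rewrite -big_split big1 // => j _ /=.
case: ifP => [/and3P[iI jI ji]|]; last first.
  by move=> H; rewrite andbCA H add0r.
by rewrite andbCA iI jI ji /=; apply: pair_cancel.
Qed.

Lemma chain_inB (R : comPzRingType) (V : finType) (C : {set {set V}}) X k
  (a b : chain V R) : chain_in C X k a -> chain_in C X k b -> chain_in C X k (a - b).
Proof.
move=> ha hb s; rewrite !ffunE => H.
case: (eqVneq (a s) 0) => [za|/ha //]; case: (eqVneq (b s) 0) => [zb|/hb //].
by rewrite za zb subrr eqxx in H.
Qed.

Lemma chain_in_sum (R : comPzRingType) (V : finType) (C : {set {set V}}) X k
  (I : finType) (P : pred I) (F : I -> chain V R) :
  (forall i, P i -> chain_in C X k (F i)) -> chain_in C X k (\sum_(i | P i) F i).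
Proof.
move=> hF s; rewrite sum_ffunE => H.
case: (pickP (fun i => P i && (F i s != 0))) => [i /andP[Pi Fi]|none].
  exact: hF Pi s Fi.
rewrite big1 ?eqxx // in H => i Pi; have := none i; rewrite Pi /=.
by move/negbFE/eqP.
Qed.

Lemma chain_in_sc (R : comPzRingType) (V : finType) (C : {set {set V}}) X k
  (c : R) (F : chain V R) : chain_in C X k F -> chain_in C X k (sc c F).
Proof.
move=> hF s; rewrite ffunE => H; apply: hF; apply: contra H => /eqP ->.
by rewrite mulr0.
Qed.

Lemma chain_in_mono (R : comPzRingType) (V : finType) (C : {set {set V}}) (X Y : {set V}) k
  (F : chain V R) : X \subset Y -> chain_in C X k F -> chain_in C Y k F.
Proof.
move=> XY hF s /hF [h1 h2 h3]; split => //; exact: subset_trans XY.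
Qed.

Lemma colclassS (V : finType) (n : nat) (col : V -> 'I_n.+1) (I J : {set 'I_n.+1}) :
  J \subset I -> colclass col J \subset colclass col I.
Proof.
move=> JI; apply/subsetP => w; rewrite !inE => /(subsetP JI); by [].
Qed.

Lemma O_chain_in (R : comPzRingType) (V : finType) (C : {set {set V}}) (n : nat)
  (col : V -> 'I_n.+1) (x : 'I_n.+1 -> V) (I : {set 'I_n.+1}) :
  is_complex C -> [set x i | i in [set: 'I_n.+1]] \in C -> cancel x col ->
  I != set0 -> chain_in C (colclass col I) #|I| (O R x I).
Proof.
move=> [_ hC] xC hx I0 s; rewrite ffunE; case: ifP => [/eqP -> _|_]; last by rewrite eqxx.
split.
- apply: (hC _ _ xC); first by apply: imsetS; apply: subsetT.
  by rewrite imset_eq0.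
- by apply/subsetP => w /imsetP[i iI ->]; rewrite inE hx.
- by rewrite card_imset //; apply: can_inj hx.
Qed.

Definition Zexp (R : comPzRingType) (V : finType) (n : nat) (u v : 'I_n.+1 -> V)
  (F : {set 'I_n.+1} -> chain V R) (J : {set 'I_n.+1}) : chain V R :=
  O R v J - O R u J - \sum_(j in J) sc (sg R J j) (F (J :\ j)).

Definition Inv (R : comPzRingType) (V : finType) (C : {set {set V}}) (n : nat)
  (col : V -> 'I_n.+1) (u v : 'I_n.+1 -> V) (k : nat)
  (F : {set 'I_n.+1} -> chain V R) : Prop :=
  forall J : {set 'I_n.+1}, (#|J| <= k)%N ->
    chain_in C (colclass col J) #|J|.+1 (F J) /\ bd (F J) = Zexp u v F J.

Lemma cardD1_lt (n : nat) (I : {set 'I_n.+1}) i : i \in I -> #|I| = #|I :\ i|.+1.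
Proof. by move=> iI; rewrite (cardsD1 i) iI. Qed.

Lemma bdZ (R : comPzRingType) (V : finType) (C : {set {set V}}) (n : nat)
  (col : V -> 'I_n.+1) (u v : 'I_n.+1 -> V) k (F : {set 'I_n.+1} -> chain V R) (I : {set 'I_n.+1}) :
  injective u -> injective v ->
  Inv C col u v k F -> #|I| = k.+1 -> bd (Zexp u v F I) = 0.
Proof.
move=> iu iv HF hI.
rewrite /Zexp !bdB bd_sum !bdO //.
rewrite [X in _ - X](eq_bigr (fun i => sc (sg R I i) (Zexp u v F (I :\ i)))); last first.
  move=> i iI; rewrite bd_sc (proj2 (HF _ _)) //.
  by move: hI; rewrite (cardD1_lt iI) => -[->].
apply/ffunP => t; rewrite !ffunE !sum_ffunE -!sumrB.
rewrite -[RHS](dsum I (fun J => F J t)); apply: eq_bigr => i iI.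
rewrite !ffunE !sum_ffunE.
under eq_bigr do rewrite ffunE.
by rewrite !mulrBr opprB addrC subrK.
Qed.


Lemma Zexp_eq (R : comPzRingType) (V : finType) (n : nat) (u v : 'I_n.+1 -> V)
  (F G : {set 'I_n.+1} -> chain V R) (J : {set 'I_n.+1}) :
  (forall j, j \in J -> F (J :\ j) = G (J :\ j)) -> Zexp u v F J = Zexp u v G J.
Proof.
move=> h; rewrite /Zexp; congr (_ - _); apply: eq_bigr => j jJ; by rewrite h.
Qed.

Lemma Zchain (R : comPzRingType) (V : finType) (C : {set {set V}}) (n : nat)
  (col : V -> 'I_n.+1) (u v : 'I_n.+1 -> V) k (F : {set 'I_n.+1} -> chain V R)
  (I : {set 'I_n.+1}) :
  is_complex C ->
  [set u i | i in [set: 'I_n.+1]] \in C -> [set v i | i in [set: 'I_n.+1]] \in C ->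
  cancel u col -> cancel v col ->
  Inv C col u v k F -> #|I| = k.+1 ->
  chain_in C (colclass col I) #|I| (Zexp u v F I).
Proof.
move=> hC uC vC hu hv HF hI.
have I0 : I != set0 by rewrite -card_gt0 hI.
apply: chain_inB; first by apply: chain_inB; apply: O_chain_in.
apply: chain_in_sum => i iI; apply: chain_in_sc.
have hIi : #|I :\ i| = k by move: hI; rewrite (cardD1_lt iI) => -[].
have [h1 _] := HF (I :\ i) (eq_leq hIi).
rewrite (cardD1_lt iI); apply: chain_in_mono h1.
by apply: colclassS; apply: subD1set.
Qed.

Lemma step (R : comPzRingType) (V : finType) (C : {set {set V}}) (n : nat)
  (col : V -> 'I_n.+1) (u v : 'I_n.+1 -> V) k (F : {set 'I_n.+1} -> chain V R) :
  is_complex C ->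
  [set u i | i in [set: 'I_n.+1]] \in C -> [set v i | i in [set: 'I_n.+1]] \in C ->
  cancel u col -> cancel v col ->
  (forall I : {set 'I_n.+1}, I != set0 ->
     reduced_acyclic R C (colclass col I) #|I|) ->
  Inv C col u v k F -> exists F' : {set 'I_n.+1} -> chain V R, Inv C col u v k.+1 F'.
Proof.
move=> hC uC vC hu hv hac HF.
have : forall I : {set 'I_n.+1}, exists P : chain V R, #|I| = k.+1 ->
    chain_in C (colclass col I) #|I|.+1 P /\ bd P = Zexp u v F I.
  move=> I; case: (eqVneq #|I| k.+1) => [hI|hI]; last by exists 0 => hI'; rewrite hI' eqxx in hI.
  have I0 : I != set0 by rewrite -card_gt0 hI.
  have [b [hb1 hb2]] := hac I I0 (Zexp u v F I) (Zchain hC uC vC hu hv HF hI)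
     (bdZ (can_inj hu) (can_inj hv) HF hI).
  by exists b.
case/fin_all_exists => G HG.
exists (fun J : {set 'I_n.+1} => if #|J| == k.+1 then G J else F J) => J hJ.
have eqZ : Zexp u v (fun J : {set 'I_n.+1} => if #|J| == k.+1 then G J else F J) J = Zexp u v F J.
  apply: Zexp_eq => j jJ.
  have : (#|J :\ j| <= k)%N by move: hJ; rewrite (cardD1_lt jJ).
  by case: eqP => // ->; rewrite ltnn.
rewrite eqZ; case: eqP => [hJ'|hJ']; first exact: HG.
apply: HF; move: hJ hJ'; rewrite leq_eqVlt; case/orP => [/eqP -> //|]; by rewrite ltnS.
Qed.

Lemma build (R : comPzRingType) (V : finType) (C : {set {set V}}) (n : nat)
  (col : V -> 'I_n.+1) (u v : 'I_n.+1 -> V) k :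
  is_complex C ->
  [set u i | i in [set: 'I_n.+1]] \in C -> [set v i | i in [set: 'I_n.+1]] \in C ->
  cancel u col -> cancel v col ->
  (forall I : {set 'I_n.+1}, I != set0 ->
     reduced_acyclic R C (colclass col I) #|I|) ->
  exists F : {set 'I_n.+1} -> chain V R, Inv C col u v k F.
Proof.
move=> hC uC vC hu hv hac; elim: k => [|k [F HF]]; last exact: step HF.
exists (fun _ => 0) => J; rewrite leqn0 cards_eq0 => /eqP ->; split.
  by move=> s; rewrite ffunE eqxx.
rewrite bd0 /Zexp big_set0 subr0.
suff -> : O R v set0 = O R u set0 by rewrite subrr.
by apply/ffunP => s; rewrite !ffunE !imset0 /ninvI !big_set0.
Qed.

Lemma imsetT_eq (V : finType) (n : nat) (x : 'I_n.+1 -> V) :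
  [set x i | i : 'I_n.+1] = [set x i | i in [set: 'I_n.+1]].
Proof. by apply/setP => w; apply/imsetP/imsetP => -[i _ ->]; exists i. Qed.

Lemma ninvT (V : finType) (n : nat) (x : 'I_n.+1 -> V) : ninv x = ninvI x setT.
Proof.
rewrite /ninv /ninvI -sum1dep_card big_mkcond /=.
rewrite [RHS]pair_big /=; apply: eq_big => [p|p _]; first by rewrite !in_setT.
by case: ifP.
Qed.

Lemma OT (R : comPzRingType) (V : finType) (n : nat) (x : 'I_n.+1 -> V) :
  O R x setT = osimplex R x.
Proof. by apply/ffunP => s; rewrite !ffunE imsetT_eq ninvT. Qed.

Lemma colorful_x (V : finType) (n : nat) (C : {set {set V}}) (col : V -> 'I_n.+1)
  (x : 'I_n.+1 -> V) : [set x i | i : 'I_n.+1] \in C -> cancel x col ->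
  colorful C col [set x i | i : 'I_n.+1].
Proof.
move=> xC hx; rewrite /colorful xC; apply/forallP => i; apply/eqP.
rewrite (_ : [set w in _ | col w == i] = [set x i]) ?cards1 //.
apply/setP => w; rewrite !inE; apply/andP/eqP => [[/imsetP[j _ ->] /eqP]|->].
  by rewrite hx => ->.
by rewrite hx eqxx; split => //; apply: imset_f.
Qed.

Theorem lemma3p3 (R : comPzRingType) (V : finType) (C : {set {set V}})
  (n : nat) (col : V -> 'I_n.+1) (u v : 'I_n.+1 -> V) :
  is_complex C ->
  [set u i | i : 'I_n.+1] \in C -> [set v i | i : 'I_n.+1] \in C ->
  (forall i, col (u i) = i) -> (forall i, col (v i) = i) ->
  (forall I : {set 'I_n.+1}, I != set0 ->
     reduced_acyclic R C (colclass col I) #|I|) ->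
  exists K : chain V R, chain_in C setT n.+2 K /\
    colorful_support C col (bd K) = osimplex R v - osimplex R u.
Proof.
move=> hC uC vC hu hv hac.
have uC' := uC; have vC' := vC.
rewrite imsetT_eq in uC'; rewrite imsetT_eq in vC'.
have [F HF] := build n.+1 hC uC' vC' hu hv hac.
have cT : #|[set: 'I_n.+1]| = n.+1 by rewrite cardsT card_ord.
have [h1 h2] := HF setT (eq_leq cT).
exists (F setT); split.
  move=> s /h1 [? ? hs]; by split; rewrite ?subsetT ?hs ?cT.
apply/ffunP => s; rewrite h2 /Zexp !OT !ffunE sum_ffunE.
case: ifP => cs.
  rewrite big1 ?subr0 // => i _; rewrite ffunE.
  case: (eqVneq (F (setT :\ i) s) 0) => [->|nz]; first by rewrite mulr0.
  have hi : #|setT :\ i| = n by move: cT; rewrite (cardD1_lt (in_setT i)) => -[].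
  have [_ sub _] := proj1 (HF _ (leqW (eq_leq hi))) s nz.
  move: cs; rewrite /colorful => /andP[_ /forallP /(_ i) /eqP h].
  have : (0 < #|[set w in s | col w == i]|)%N by rewrite h.
  rewrite card_gt0 => /set0Pn [w]; rewrite inE => /andP[ws /eqP cw].
  by have := subsetP sub w ws; rewrite !inE cw eqxx.
case: eqP => [E|_]; first by rewrite E colorful_x in cs.
case: eqP => [E|_]; first by rewrite E colorful_x in cs.
by rewrite subrr.
Qed.
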